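(* If a domino tiling system $\mathcal{D}$ is solvable, then there exists a $\mathcal{D}$-snake.
   Context: A domino tiling system is $\mathcal{D}=(\mathrm{Col},\mathrm{T},\mathrm{white})$ with $\mathrm{Col}$ a finite set of colours, $\mathrm{T}\subseteq\mathrm{Col}^4$ a set of tiles $(c_l,c_d,c_r,c_u)$ and $\mathrm{white}\in\mathrm{Col}$; throughout, $\mathrm{T}$ contains no tile with more than two white sides. A tile is left-/down-/right-/up-border if $c_l$/$c_d$/$c_r$/$c_u$ equals white. Tiles $t=(c_l,c_d,c_r,c_u)$, $t'=(c'_l,c'_d,c'_r,c'_u)$ are H-compatible if $c_r=c'_l$ and V-compatible if $c_u=c'_d$. $\mathcal{D}$ covers $\mathbb{Z}_n\times\mathbb{Z}_m$ ($n,m$ positive) if there is $\xi:\mathbb{Z}_n\times\mathbb{Z}_m\to\mathrm{T}$ such that for all $(x,y)$ with $\xi(x,y)=(c_l,c_d,c_r,c_u)$: $x=0$ iff $c_l$ is white, $x=n-1$ iff $c_r$ is white, $y=0$ iff $c_d$ is white, $y=m-1$ iff $c_u$ is white; $\xi(x,y),\xi(x+1,y)$ are H-compatible whenever $x+1<n$; $\xi(x,y),\xi(x,y+1)$ are V-compatible whenever $y+1<m$. $\mathcal{D}$ is solvable if it covers some $\mathbb{Z}_n\times\mathbb{Z}_m$. Use a role name $r$, individual names $\mathsf{ld},\mathsf{rd},\mathsf{lu},\mathsf{ru}$ (the named ones) and concept names $C_t$ ($t\in\mathrm{T}$); an element carries $t$ if it lies in $C_t^{\mathcal{I}}$. An interpretation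 $\mathcal{I}$ is a $\mathcal{D}$-snake if: (SPath) there is an $r^+$-path starting at $\mathsf{ld}^{\mathcal{I}}$, later passing $\mathsf{rd}^{\mathcal{I}}$, later $\mathsf{lu}^{\mathcal{I}}$ and ending at $\mathsf{ru}^{\mathcal{I}}$ (at positions $1<i<j<$ last); (SNoLoop) no named element $r^+$-reaches itself; (SUniqTil) every element $r^*$-reachable from $\mathsf{ld}^{\mathcal{I}}$ carries exactly one tile; (SSpecTil) the named elements are exactly the elements $r^*$-reachable from $\mathsf{ld}^{\mathcal{I}}$ carrying a tile with two white sides, and $\mathsf{ld}^{\mathcal{I}}$ carries a left- and down-border tile, $\mathsf{rd}^{\mathcal{I}}$ a right- and down-border tile, $\mathsf{lu}^{\mathcal{I}}$ a left- and up-border tile, $\mathsf{ru}^{\mathcal{I}}$ a right- and up-border tile; (SHori) for every element $d\neq\mathsf{ru}^{\mathcal{I}}$ that is $r^*$-reachable from $\mathsf{ld}^{\mathcal{I}}$ and carries $t=(c_l,c_d,c_r,c_u)$ there is a tile $t'=(c'_l,c'_d,c'_r,c'_u)$ carried by all $r$-successors of $d$ such that (i) $t,t'$ are H-compatible, (ii) if $c_d$ is white then ($c_r$ is not white iff $c'_d$ is white), (iii) if $c_u$ is white then $c'_u$ is white; (SLen) there is a unique positive integer $N$ such that all $r^+$-paths from $\mathsf{ld}^{\mathcal{I}}$ to $\mathsf{rd}^{\mathcal{I}}$ have length $N-1$, and $\mathsf{rd}^{\mathcal{I}}$ is the only element $r^{N-1}$-reachable from $\mathsf{ld}^{\mathcal{I}}$;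 (SVerti) for every element $d$ $r^*$-reachable from $\mathsf{ld}^{\mathcal{I}}$ carrying a tile $t$ that is not up-border, there is a tile $t'$ carried by all elements $r^N$-reachable from $d$ (with $N$ from (SLen)) such that $t,t'$ are V-compatible and $t$ is left-border (resp. right-border) iff $t'$ is. Path length is the number of edges. *)

(* Defs.v *)
From mathcomp Require Import all_boot.
Set Implicit Arguments. Unset Strict Implicit. Unset Printing Implicit Defensive.

Section Domino.
Variable Col : finType.

Record tile := Tile { cl : Col; cd : Col; cr : Col; cu : Col }.

Variable white : Col.

Definition left_border  (t : tile) : Prop := cl t = white.
Definition down_border  (t : tile) : Prop := cd t = white.
Definition right_border (t : tile) : Prop := cr t = white.
Definition up_border    (t : tile) : Prop := cu t = white.

Definition nwhite (t : tile) : nat :=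
  (cl t == white) + (cd t == white) + (cr t == white) + (cu t == white).

Definition H_compat (t t' : tile) : Prop := cr t = cl t'.
Definition V_compat (t t' : tile) : Prop := cu t = cd t'.

Variable T : pred tile.

(* D covers Z_n x Z_m ; xi is only relevant on the grid x < n, y < m *)
Definition covers (n m : nat) : Prop :=
  0 < n /\ 0 < m /\
  exists xi : nat -> nat -> tile,
    (forall x y, x < n -> y < m ->
       [/\ T (xi x y),
           (x = 0 <-> cl (xi x y) = white),
           (x = n.-1 <-> cr (xi x y) = white),
           (y = 0 <-> cd (xi x y) = white) &
           (y = m.-1 <-> cu (xi x y) = white)]) /\
    (forall x y, x.+1 < n -> y < m -> H_compat (xi x y) (xi x.+1 y)) /\
    (forall x y, x < n -> y.+1 < m -> V_compat (xi x y) (xi x y.+1)).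

Definition solvable : Prop := exists n m, covers n m.

(* Interpretations over the signature: role r, individuals ld rd lu ru,
   concept names C_t (for t in T). *)
Record interp := Interp {
  dom : Type;
  role : dom -> dom -> Prop;
  ld : dom; rd : dom; lu : dom; ru : dom;
  conc : tile -> dom -> Prop }.
Arguments role : clear implicits.
Arguments conc : clear implicits.

Section Snake.
Variable J : interp.

Fixpoint rpow (k : nat) (d e : dom J) : Prop :=
  match k with
  | 0 => d = e
  | k'.+1 => exists d', role J d d' /\ rpow k' d' e
  end.

Definition rplus (d e : dom J) : Prop := exists k, 0 < k /\ rpow k d e.
Definition rstar (d e : dom J) : Prop := exists k, rpow k d e.

Definition carries (d : dom J) (t : tile) : Prop := T t /\ conc J t d.

Definition named (d : dom J) : Prop :=
  d = ld J \/ d = rd J \/ d = lu J \/ d = ru J.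

Definition SPath : Prop :=
  exists (L : nat) (p : nat -> dom J),
    p 0 = ld J /\ p L = ru J /\
    (forall k, k < L -> role J (p k) (p k.+1)) /\
    exists i j, [/\ 0 < i, i < j, j < L, p i = rd J & p j = lu J].

Definition SNoLoop : Prop := forall d, named d -> ~ rplus d d.

Definition SUniqTil : Prop :=
  forall d, rstar (ld J) d -> exists! t, carries d t.

Definition SSpecTil : Prop :=
  (forall d, named d <->
     (rstar (ld J) d /\ exists t, carries d t /\ nwhite t = 2)) /\
  (exists t, carries (ld J) t /\ left_border t /\ down_border t) /\
  (exists t, carries (rd J) t /\ right_border t /\ down_border t) /\
  (exists t, carries (lu J) t /\ left_border t /\ up_border t) /\
  (exists t, carries (ru J) t /\ right_border t /\ up_border t).

Definition SHori : Prop :=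
  forall d t, d <> ru J -> rstar (ld J) d -> carries d t ->
    exists t', T t' /\
      (forall e, role J d e -> carries e t') /\
      H_compat t t' /\
      (down_border t -> (~ right_border t <-> down_border t')) /\
      (up_border t -> up_border t').

Definition SLen_prop (N : nat) : Prop :=
  0 < N /\
  (forall k, 0 < k -> rpow k (ld J) (rd J) -> k = N.-1) /\
  (forall e, rpow N.-1 (ld J) e <-> e = rd J).

Definition SVerti (N : nat) : Prop :=
  forall d t, rstar (ld J) d -> carries d t -> ~ up_border t ->
    exists t', T t' /\
      (forall e, rpow N d e -> carries e t') /\
      V_compat t t' /\
      (left_border t <-> left_border t') /\
      (right_border t <-> right_border t').

Definition is_snake : Prop :=
  SPath /\ SNoLoop /\ SUniqTil /\ SSpecTil /\ SHori /\
  exists N, unique SLen_prop N /\ SVerti N.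

End Snake.
End Domino.

(* Main.v *)
Require Import Defs.
From mathcomp Require Import all_boot zify.
Set Implicit Arguments. Unset Strict Implicit.

Section S.
Variables (Col : finType) (T : pred (tile Col)) (white : Col) (n m : nat)
  (xi : nat -> nat -> tile Col).
Hypothesis Hw : forall t, T t -> nwhite white t <= 2.
Hypotheses (n0 : 0 < n) (m0 : 0 < m).
Hypothesis Hxi : forall x y, x < n -> y < m ->
       [/\ T (xi x y),
           (x = 0 <-> cl (xi x y) = white),
           (x = n.-1 <-> cr (xi x y) = white),
           (y = 0 <-> cd (xi x y) = white) &
           (y = m.-1 <-> cu (xi x y) = white)].
Hypothesis HH : forall x y, x.+1 < n -> y < m -> H_compat (xi x y) (xi x.+1 y).
Hypothesis HV : forall x y, x < n -> y.+1 < m -> V_compat (xi x y) (xi x y.+1).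

Lemma bP x y : x < n -> y < m ->
  [/\ T (xi x y), (cl (xi x y) == white) = (x == 0),
      (cr (xi x y) == white) = (x == n.-1),
      (cd (xi x y) == white) = (y == 0) &
      (cu (xi x y) == white) = (y == m.-1)].
Proof.
move=> hx hy; case: (Hxi hx hy) => h1 h2 h3 h4 h5; split => //;
  apply/eqP/eqP; by [move/h2|move/h3|move/h4|move/h5|move/h2|move/h3|move/h4|move/h5].
Qed.

Lemma nwE x y : x < n -> y < m ->
  nwhite white (xi x y) = (x == 0) + (y == 0) + (x == n.-1) + (y == m.-1).
Proof. by move=> hx hy; case: (bP hx hy) => _ e1 e2 e3 e4; rewrite /nwhite e1 e2 e3 e4. Qed.

Lemma n2 : 1 < n.
Proof.
case: (bP n0 m0) => hT _ _ _ _; have := Hw hT; rewrite nwE //=.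
by case: n n0 => [|[|k]] //=; case: (0 == m.-1).
Qed.

Lemma m2 : 1 < m.
Proof.
case: (bP n0 m0) => hT _ _ _ _; have := Hw hT; rewrite nwE //=.
case: m m0 => [|[|k]] //=; case: (0 == n.-1) => //.
Qed.

Definition tl k := xi (k %% n) (k %/ n).

Lemma tlE x y : x < n -> tl (y * n + x) = xi x y.
Proof. by move=> hx; rewrite /tl modnMDl modn_small // divnMDl // divn_small // addn0. Qed.

Lemma decomp d : d < n * m -> exists x y, [/\ x < n, y < m & d = y * n + x].
Proof.
move=> hd; exists (d %% n), (d %/ n); split.
- by rewrite ltn_pmod.
- by rewrite ltn_divLR // mulnC.
- exact: divn_eq.
Qed.

Definition J : interp Col := {| dom := nat;
  role := fun a b : nat => b = a.+1 /\ a.+1 < n * m;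
  ld := 0; rd := n.-1; lu := m.-1 * n; ru := (n * m).-1;
  conc := fun t (k : nat) => t = tl k |}.

Lemma rpowE k (a e : nat) : @rpow Col J k a e <-> e = a + k /\ (k = 0 \/ a + k < n * m).
Proof.
elim: k a => [|k IH] a /=.
  split; [move=> ->; lia | case=> ->; lia].
split.
  case=> d' [[-> ha] /IH [-> h]]; lia.
case=> he h; exists a.+1; split; first by split => //; lia.
apply/IH; lia.
Qed.


Lemma nm0 : 0 < n * m. Proof. by rewrite muln_gt0 n0 m0. Qed.

Lemma rstarE (d : nat) : @rstar Col J 0 d <-> d < n * m.
Proof.
have := nm0; split.
  by case=> k /rpowE [-> [->|h]] //; rewrite add0n.
by move=> hd; exists d; apply/rpowE; lia.
Qed.

Lemma tlT d : d < n * m -> T (tl d).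
Proof. by case/decomp=> x [y [hx hy ->]]; rewrite tlE //; case: (bP hx hy). Qed.

Lemma SPath_ok : SPath J.
Proof.
have h2 := n2; have h3 := m2.
exists (n * m).-1, id; split => //; split => //; split.
  move=> k hk /=; split => //; lia.
exists n.-1, (m.-1 * n); split => //; nia.
Qed.

Lemma SNoLoop_ok : SNoLoop J.
Proof. by move=> d _ [k [hk /rpowE [h _]]]; lia. Qed.

Lemma SUniqTil_ok : SUniqTil T J.
Proof.
move=> d /rstarE hd; exists (tl d); split.
  by split; [apply: tlT|].
by move=> t' [_ ->].
Qed.

Lemma cornerE x y : x < n -> y < m ->
  (nwhite white (xi x y) = 2 <->
   [\/ x = 0 /\ y = 0, x = n.-1 /\ y = 0, x = 0 /\ y = m.-1 | x = n.-1 /\ y = m.-1]).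
Proof.
move=> hx hy; rewrite nwE //; have h2 := n2; have h3 := m2.
case ex0: (x == 0); case ey0: (y == 0); case ex1: (x == n.-1); case ey1: (y == m.-1);
  rewrite /=; split => h; try (exfalso; lia);
  try (case: h; lia);
  first [by constructor 1; lia | by constructor 2; lia | by constructor 3; lia | by constructor 4; lia].
Qed.


Lemma ruE : (n * m).-1 = m.-1 * n + n.-1.
Proof. have : m.-1 * n + n = n * m by rewrite addnC -mulSn prednK // mulnC. lia. Qed.

Lemma named_xy (d : nat) : @named Col J d ->
  exists x y, [/\ x < n, y < m, d = y * n + x &
   [\/ x = 0 /\ y = 0, x = n.-1 /\ y = 0, x = 0 /\ y = m.-1 | x = n.-1 /\ y = m.-1]].
Proof.
have h2 := n2; have h3 := m2.
case=> [->|[->|[->|->]]].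
- exists 0, 0; split; [lia|lia|done|by constructor 1].
- exists n.-1, 0; split; [lia|lia|done|by constructor 2].
- exists 0, m.-1; split; [lia|lia|by rewrite addn0|by constructor 3].
- exists n.-1, m.-1; split; [lia|lia|exact: ruE|by constructor 4].
Qed.

Lemma SSpecTil_ok : SSpecTil white T J.
Proof.
have h2 := n2; have h3 := m2.
split.
  move=> d; split.
    case/named_xy=> x [y [hx hy -> hc]]; split.
      by apply/rstarE; nia.
    exists (xi x y); split; last by apply/cornerE.
    by rewrite /carries /= tlE //; case: (bP hx hy).
  case=> /rstarE hd [t [[hT /= ->] hw]].
  case: (decomp hd) => x [y [hx hy ed]].
  move: hw; rewrite ed tlE // => /cornerE-/(_ hx hy).
  rewrite /named /=.
  case=> [[-> ->]|[-> ->]|[-> ->]|[-> ->]]; nia.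
have cor : forall x y, x < n -> y < m -> carries T (J:=J) (y * n + x) (xi x y).
  by move=> x y hx hy; rewrite /carries /= tlE //; case: (bP hx hy).
have e1 : (ld J) = 0 * n + 0 by [].
have e2 : (rd J) = 0 * n + n.-1 by [].
have e3 : (lu J) = m.-1 * n + 0 by rewrite addn0.
have e4 : (ru J) = m.-1 * n + n.-1 by exact: ruE.
split; [|split; [|split]].
- exists (xi 0 0); rewrite e1; split; first by apply: cor.
  by case: (Hxi n0 m0) => _ a b c d; rewrite /left_border /down_border /right_border /up_border; split; [apply a|apply c].
- have hx : n.-1 < n by lia.
  exists (xi n.-1 0); rewrite e2; split; first by apply: cor.
  by case: (Hxi hx m0) => _ a b c d; rewrite /left_border /down_border /right_border /up_border; split; [apply b|apply c].
- have hy : m.-1 < m by lia.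
  exists (xi 0 m.-1); rewrite e3; split; first by apply: cor.
  by case: (Hxi n0 hy) => _ a b c d; rewrite /left_border /down_border /right_border /up_border; split; [apply a|apply d].
- have hx : n.-1 < n by lia. have hy : m.-1 < m by lia.
  exists (xi n.-1 m.-1); rewrite e4; split; first by apply: cor.
  by case: (Hxi hx hy) => _ a b c d; rewrite /left_border /down_border /right_border /up_border; split; [apply b|apply d].
Qed.


Lemma SHori_ok : SHori white T J.
Proof.
have h2 := n2; have h3 := m2.
move=> d t /= hne /rstarE hd [hT ->].
have hd1 : d.+1 < n * m by have := ruE; lia.
exists (tl d.+1); split; first exact: tlT.
split; first by move=> e [-> _]; split; [apply: tlT|].
case: (decomp hd) => x [y [hx hy ed]]; rewrite ed.
rewrite /down_border /right_border /up_border.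
have [hx1|hx1] : x.+1 < n \/ x = n.-1 by lia.
- rewrite -addnS tlE // tlE //.
  case: (Hxi hx hy) => _ a1 a2 a3 a4; case: (Hxi hx1 hy) => _ b1 b2 b3 b4.
  split; first exact: HH.
  rewrite -a3 -a2 -b3 -a4 -b4; split; lia.
- have hy1 : y.+1 < m.
    have := ruE; have : y * n + x <> m.-1 * n + n.-1 by rewrite -ruE -ed.
    rewrite hx1 => hneq _; have : y <> m.-1 by move=> ey; apply: hneq; rewrite ey.
    lia.
  have -> : (y * n + x).+1 = y.+1 * n + 0 by rewrite mulSn hx1 addn0; lia.
  rewrite tlE // tlE //.
  case: (Hxi hx hy) => _ a1 a2 a3 a4; case: (Hxi n0 hy1) => _ b1 b2 b3 b4.
  split; first by rewrite /H_compat; have := proj1 a2 hx1; have := proj1 b1 erefl; congruence.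
  rewrite -a3 -a2 -b3 -a4 -b4; split; lia.
Qed.

Lemma SLen_ok : unique (SLen_prop J) n.
Proof.
have h2 := n2.
split.
  split => //; split.
    by move=> k hk /rpowE /= [h _]; lia.
  by move=> e /=; rewrite rpowE; have := leq_pmulr n m0; split; [case=> -> _; lia| move=> ->; lia].
move=> N [hN [_ h]]; have := (proj2 (h (rd J)) erefl); rewrite /= rpowE; lia.
Qed.

Lemma SVerti_ok : SVerti white T J n.
Proof.
have h2 := n2; have h3 := m2.
move=> d t /rstarE hd [hT ->].
case: (decomp hd) => x [y [hx hy ed]]; rewrite ed tlE // /up_border => hu.
case: (Hxi hx hy) => _ a1 a2 a3 a4.
have hy1 : y.+1 < m.
  have : y <> m.-1 by move=> e; apply: hu; apply/a4.
  lia.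
case: (Hxi hx hy1) => b0 b1 b2 b3 b4.
exists (xi x y.+1); split => //; split.
  move=> e /rpowE [-> _]; rewrite /carries /=.
  have -> : y * n + x + n = y.+1 * n + x by rewrite mulSn; lia.
  by rewrite tlE.
split; first exact: HV.
rewrite /left_border /right_border -a1 -b1 -a2 -b2; split; lia.
Qed.

Lemma snake_ok : is_snake white T J.
Proof.
split; first exact: SPath_ok.
split; first exact: SNoLoop_ok.
split; first exact: SUniqTil_ok.
split; first exact: SSpecTil_ok.
split; first exact: SHori_ok.
exists n; split; [exact: SLen_ok | exact: SVerti_ok].
Qed.

End S.

Theorem lemma4p3 (Col : finType) (T : pred (tile Col)) (white : Col) :
  (forall t, T t -> nwhite white t <= 2) ->
  solvable white T ->
  exists I : interp Col, is_snake white T I.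
Proof.
rewrite /solvable /covers => Hw [n [m [n0 [m0 [xi [Hxi [HH HV]]]]]]].
exists (J n m xi); exact: (snake_ok Hw n0 m0 Hxi HH HV).
Qed.
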